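(* For any integer $d\ge 841$ there exists a polynomial $f\in\mathbb{Z}[x]$ of degree at most $d\log d$ and height $H(f)\le\exp(2d\log d)$ whose minimal-degree binomial multiple $x^m-a$ (with $a\in\mathbb{Q}$) satisfies $m>\exp(\sqrt d)$ and $H(a)>2^{\exp(\sqrt d)}$.
   Context: $\log$ denotes the natural logarithm. A binomial multiple of $f$ is a multiple of $f$ in $\mathbb{Q}[x]$ of the form $x^m-a$ with $m\ge1$ and $a\in\mathbb{Q}$. Height of a polynomial: for nonzero $f\in\mathbb{Q}[x]$, let $r$ be the least positive rational with $rf\in\mathbb{Z}[x]$; if $rf=\sum_i a_ix^{e_i}$ with $a_i\in\mathbb{Z}$, then $H(f)=\max_i|a_i|$. For a nonzero rational number $a=p/q$ in lowest terms, $H(a)=\max(|p|,|q|)$. *)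

(* Defs.v *)
From Stdlib Require Import Reals.
From mathcomp Require Import all_boot all_order all_algebra.

Set Implicit Arguments.
Unset Strict Implicit.
Unset Printing Implicit Defensive.

Import Order.TTheory GRing.Theory Num.Theory.

Local Open Scope ring_scope.

(* Height of a nonzero f in Z[x], following the paper: scale f by the least
   positive rational r with r f in Z[x] (i.e. divide by the content), then take
   the maximum absolute value of the coefficients.  zprimitive f is f divided by
   its (signed) content; the sign does not affect absolute values. *)
Definition polyHeight (f : {poly int}) : nat :=
  \max_(i < size f) absz ((zprimitive f)`_i)%R.

Definition ratHeight (a : rat) : nat := maxn (absz (numq a)) (absz (denq a)).

Definition is_binomial_multiple (f : {poly int}) (m : nat) (a : rat) : Prop :=
  (0 < m)%N /\ (map_poly (intr : int -> rat) f %| 'X^m - a%:P).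

Definition is_min_binomial_multiple (f : {poly int}) (m : nat) (a : rat) : Prop :=
  is_binomial_multiple f m a /\
  (forall (m' : nat) (a' : rat), is_binomial_multiple f m' a' -> (m <= m')%N).

Local Close Scope ring_scope.
Local Open Scope R_scope.

Definition dlogd (d : nat) : R := INR d * ln (INR d).
Definition expsqrt (d : nat) : R := exp (sqrt (INR d)).

(* Main.v *)
Require Import Defs.
From Stdlib Require Import Reals.
From mathcomp Require Import all_boot all_order all_algebra all_field.
From mathcomp Require Import ring zify.
From Stdlib Require Import Lra Lia.
Set Implicit Arguments. Unset Strict Implicit. Unset Printing Implicit Defensive.
Import Order.TTheory GRing.Theory Num.Theory.
Local Open Scope ring_scope.
Definition Ssum (k n : nat) : rat :=
  \sum_(j < k.+1) (-1)^+j * 'C(k,j)%:R / (n+j)%:R.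
Definition Pcl (k n : nat) : rat := k`!%:R / \prod_(j < k.+1) (n+j)%:R.

Lemma Ssum_rec k n : Ssum k.+1 n = Ssum k n - Ssum k n.+1.
Proof.
rewrite /Ssum big_ord_recl [X in _ = X - _]big_ord_recl /= !expr0 !bin0 !mul1r !addn0.
have -> : \sum_(i < k.+1) (-1) ^+ bump 0 i * 'C(k.+1, bump 0 i)%:R / (n + bump 0 i)%:R
   = \sum_(i < k.+1) (-1) ^+ i.+1 * 'C(k, i.+1)%:R / (n + i.+1)%:R
     - \sum_(i < k.+1) (-1) ^+ i * 'C(k, i)%:R / (n.+1 + i)%:R :> rat.
  rewrite -sumrB; apply: eq_bigr => j _.
  rewrite /bump /= add1n binS natrD exprS addnS addSn.
  rewrite !mulrDr !mulrDl mulN1r; ring.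
rewrite big_ord_recr /= bin_small // mulr0 mul0r addr0 addrA //.
Qed.

Lemma Pcl_rec k n : (0 < n)%N -> Pcl k.+1 n = Pcl k n - Pcl k n.+1.
Proof.
move=> n0; rewrite /Pcl.
set Q := \prod_(j < k) (n.+1 + j)%:R : rat.
have e1 : \prod_(j < k.+1) (n+j)%:R = n%:R * Q :> rat.
  by rewrite big_ord_recl addn0; congr (_ * _); apply: eq_bigr => j _; rewrite addnS.
have e2 : \prod_(j < k.+1) (n.+1+j)%:R = Q * (n + k.+1)%:R :> rat.
  by rewrite big_ord_recr /= addSnnS.
have e3 : \prod_(j < k.+2) (n+j)%:R = n%:R * (Q * (n+k.+1)%:R) :> rat.
  rewrite big_ord_recl addn0 -e2; congr (_ * _); apply: eq_bigr => j _; by rewrite addnS.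
have Q0 : Q != 0 by rewrite prodf_seq_neq0; apply/allP => j _; rewrite pnatr_eq0.
rewrite e1 e2 e3 factS natrM !natrD.
have n0' : n%:R != 0 :> rat by rewrite pnatr_eq0 -lt0n.
have nk : (n%:R + k.+1%:R) != 0 :> rat by rewrite -natrD pnatr_eq0 addnS.
field.
rewrite Q0 n0' andbT andbT; have -> : n%:R + (1 + k%:R) = (n + k.+1)%:R :> rat by rewrite natrD -natr1 (addrC k%:R).
by rewrite pnatr_eq0 addnS.

Qed.

Lemma Ssum_Pcl k n : (0 < n)%N -> Ssum k n = Pcl k n.
Proof.
elim: k n => [|k IH] n n0.
  by rewrite /Ssum /Pcl big_ord1 big_ord1 /= expr0 bin0 mul1r fact0.
by rewrite Ssum_rec Pcl_rec // IH // IH.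
Qed.

Lemma fact_bound k : (4 ^ k * (k`! * k`!) <= (k.*2.+1)`!)%N.
Proof.
elim: k => [|k IH] //.
rewrite doubleS !factS.
have h1 : (4 ^ k.+1 * ((k.+1 * k`!) * (k.+1 * k`!)) = (4 * (k.+1 * k.+1)) * (4 ^ k * (k`! * k`!)))%N.
  rewrite expnS; ring.
rewrite h1.
have h2 : (4 * (k.+1 * k.+1) <= k.*2.+3 * k.*2.+2)%N by nia.
apply: (leq_trans (leq_mul h2 IH)); by rewrite -(factS (k.*2)) mulnA.
Qed.

Lemma lcm_bound k m : (0 < m)%N ->
  (forall j, (0 < j)%N -> (j <= k.*2.+1)%N -> (j %| m)%N) -> (4 ^ k <= m)%N.
Proof.
move=> m0 hdiv.
pose z : int := \sum_(j < k.+1) (-1)^+j * ('C(k,j) * (m %/ (k.+1 + j)))%:Z.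
have ez : m%:R * Ssum k k.+1 = z%:~R.
  rewrite /Ssum /z mulr_sumr rmorph_sum /=; apply: eq_bigr => j _.
  have hd : (k.+1 + j %| m)%N by have hj := ltn_ord j; apply: hdiv; rewrite -?addnn; lia.
  have nz : forall n : nat, (n%:Z)%:~R = n%:R :> rat by [].
  rewrite rmorphM /= rmorphXn /= rmorphN1 nz natrM.
  rewrite -{1}(divnK hd) natrM [(m %/ _)%:R * _]mulrC.
  have hq : (k.+1 + j)%:R != 0 :> rat by rewrite pnatr_eq0 addSn.
  field; by rewrite (_ : 1 + k%:R + j%:R = (k.+1 + j)%:R :> rat) // natrD mulrS.
have pos : 0 < m%:R * Ssum k k.+1.
  rewrite Ssum_Pcl // /Pcl mulr_gt0 ?ltr0n // divr_gt0 ?ltr0n ?fact_gt0 //.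
  by rewrite prodr_gt0 // => j _; rewrite ltr0n addSn.
have z1 : 1 <= m%:R * Ssum k k.+1.
  rewrite ez in pos *; rewrite ler1z; move: pos; rewrite ltr0z; lia.
move: z1; rewrite Ssum_Pcl // /Pcl.
set P := \prod_(j < k.+1) (k.+1 + j)%:R : rat.
have eP : P * k`!%:R = (k.*2.+1)`!%:R.
  have hk : (k <= k.*2.+1)%N by rewrite -addnn; lia.
  rewrite (fact_split hk) natrM mulrC; congr (_ * _).
  rewrite /P natr_prod (@big_addn _ _ _ 0 _ k.+1) big_mkord.
  have -> : (k.*2.+2 - k.+1 = k.+1)%N by rewrite -addnn; lia.
  by apply: eq_bigr => i _; rewrite addnC.
have P0 : 0 < P by rewrite prodr_gt0 // => j _; rewrite ltr0n addSn.
have F0 : 0 < k`!%:R :> rat by rewrite ltr0n fact_gt0.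
rewrite mulrA ler_pdivlMr // mul1r => h.
have : (4 ^ k * (k`! * k`!))%:R <= (m * k`! * k`!)%:R :> rat.
  apply: (le_trans (_ : _ <= (k.*2.+1)`!%:R)); first by rewrite ler_nat; exact: fact_bound.
  rewrite -eP !natrM ler_pM2r //.
rewrite ler_nat -mulnA leq_pmul2r //; by rewrite muln_gt0 fact_gt0.
Qed.
Definition Pb (p : {poly algC}) n :=
  (size p <= n.+1)%N /\ forall i, `|p`_i| <= 'C(n,i)%:R.

Lemma Pb_lin p n r : `|r| <= 1 -> Pb p n -> Pb (p * ('X - r%:P)) n.+1.
Proof.
move=> hr [hs hc]; split.
  apply: (leq_trans (size_polyMleq _ _)); rewrite size_XsubC; lia.
move=> i; rewrite mulrBr coefB coefMX coefMC.
case: i => [|j] /=.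
  rewrite sub0r normrN normrM bin0.
  have := hc 0%N; rewrite bin0 => h0.
  by rewrite -[1](mulr1 1) ler_pM // ?normr_ge0.
rewrite binS natrD (le_trans (ler_normB _ _)) // addrC lerD //.
rewrite normrM -[_%:R](mulr1) ler_pM // ?normr_ge0.
Qed.

Lemma Pb_prod (I : Type) (s : seq I) (P : pred I) (g : I -> algC) q n :
  (forall i, `|g i| <= 1) -> Pb q n ->
  Pb (q * \prod_(i <- s | P i) ('X - (g i)%:P)) (n + count P s).
Proof.
move=> hg; elim: s q n => [|x s IH] q n hq /=.
  by rewrite big_nil mulr1 addn0.
rewrite big_cons; case: (P x) => /=.
  rewrite mulrA (_ : (n + (1 + count P s) = n.+1 + count P s)%N); last lia.
  by apply: IH; apply: Pb_lin.
by rewrite add0n; apply: IH.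
Qed.

Definition zz (d : nat) : algC := sval (C_prim_root_exists (ltn0Sn d.-1)).

Lemma zz_prim d : (0 < d)%N -> d.-primitive_root (zz d).
Proof. by move=> d0; rewrite /zz; case: C_prim_root_exists => z /=; rewrite prednK. Qed.

Lemma zz_norm d k : (0 < d)%N -> `|zz d ^+ k| = 1.
Proof.
move=> d0; have hp := zz_prim d0.
have h1 : `|zz d| ^+ d == 1 by rewrite -normrX prim_expr_order // normr1.
by rewrite normrX (eqP (_ : `|zz d| == 1)) ?expr1n // -(pexpr_eq1 d0) ?normr_ge0.
Qed.

Definition FF (N : nat) : {poly int} := \prod_(d <- iota 1 N) 'Phi_d.

Lemma FFC N : map_poly intr (FF N) = \prod_(d <- iota 1 N) cyclotomic (zz d) d :> {poly algC}.
Proof.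
rewrite /FF rmorph_prod; apply: eq_big_seq => d; rewrite mem_iota => /andP[d0 _].
exact: Cintr_Cyclotomic (zz_prim d0).
Qed.

Lemma Pb_cyc l N : (forall d, d \in l -> 0 < d <= N)%N ->
  exists n, (n <= size l * N)%N /\ Pb (\prod_(d <- l) cyclotomic (zz d) d) n.
Proof.
elim: l => [|x l IH] hl.
  exists 0%N; split => //; rewrite big_nil; split; first by rewrite size_poly1.
  by move=> [|i]; rewrite coef1 ?bin0 ?normr1 // normr0 bin0n.
have [n [hn hP]] : exists n, (n <= size l * N)%N /\ Pb (\prod_(d <- l) cyclotomic (zz d) d) n.
  by apply: IH => d hd; apply: hl; rewrite inE hd orbT.
have /andP[x0 xN] : (0 < x <= N)%N by apply: hl; rewrite inE eqxx.
exists (n + count (fun k : 'I_x => coprime k x) (index_enum 'I_x))%N; split.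
  have := count_size (fun k : 'I_x => coprime k x) (index_enum 'I_x).
  rewrite /index_enum -enumT size_enum_ord /= => hc.
  by rewrite mulSn addnC; apply: leq_add => //; exact: leq_trans hc xN.
rewrite big_cons mulrC /cyclotomic.
apply: Pb_prod => // k; by rewrite zz_norm.
Qed.

Lemma bin_le2 n i : ('C(n,i) <= 2 ^ n)%N.
Proof.
elim: n i => [|n IH] [|i]; rewrite ?bin0 ?expn_gt0 // ?bin0n //.
rewrite binS expnS; have := IH i; have := IH i.+1; lia.
Qed.

Lemma FF_bound N : exists n, (n <= N * N)%N /\ (size (FF N) <= n.+1)%N /\
  forall i, (absz ((FF N)`_i)%R <= 2 ^ n)%N.
Proof.
have [n [hn [hs hc]]] : exists n, (n <= size (iota 1 N) * N)%N /\
     Pb (\prod_(d <- iota 1 N) cyclotomic (zz d) d) n.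
  by apply: Pb_cyc => d; rewrite mem_iota; lia.
rewrite size_iota in hn; exists n; split => //; rewrite -FFC in hs hc; split.
  by rewrite size_map_inj_poly ?rmorph0 // in hs; exact: intr_inj.
move=> i; have := hc i; rewrite coef_map /= -intr_norm => h.
apply: (leq_trans _ (bin_le2 n i)).
have : (`|(FF N)`_i| <= ('C(n, i) : int)).
  by rewrite -(ler_int algC).
by rewrite -[`|_|]abszE.
Qed.

Definition ff (N : nat) : {poly int} := FF N \Po (2%:Z *: 'X).

Lemma coef_compZ (R : comNzRingType) (p : {poly R}) (c : R) i :
  (p \Po (c *: 'X))`_i = p`_i * c ^+ i.
Proof.
rewrite comp_polyE coef_sum.
under eq_bigr => j _ do rewrite exprZn scalerA coefZ coefXn.
have [hi|hi] := ltnP i (size p).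
  rewrite (bigD1 (Ordinal hi)) //= eqxx mulr1 big1 ?addr0 // => j hj.
  have : i != j by apply: contra hj => /eqP e; apply/eqP/val_inj.
  by move/negbTE ->; rewrite mulr0.
rewrite big1 ?(nth_default 0 hi) ?mul0r // => j _.
by rewrite (_ : (i == j) = false) ?mulr0 //; apply/negbTE; rewrite neq_ltn (leq_trans (ltn_ord j) hi) orbT.
Qed.

Lemma FF_monic N : FF N \is monic.
Proof. by apply: monic_prod => d _; exact: Cyclotomic_monic. Qed.

Lemma size_ff N : size (ff N) = size (FF N).
Proof. by rewrite /ff size_comp_poly2 // size_scale ?size_polyX. Qed.

Lemma ff_neq0 N : ff N != 0.
Proof. by rewrite -size_poly_eq0 size_ff size_poly_eq0 monic_neq0 // FF_monic. Qed.

Lemma FC_root N d : (0 < d <= N)%N -> root (map_poly intr (FF N) : {poly algC}) (zz d).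
Proof.
move=> hd; have d0 : (0 < d)%N by lia.
have hm : d \in iota 1 N by rewrite mem_iota; lia.
rewrite FFC (big_rem d hm) /=.
by rewrite rootM (root_cyclotomic (zz_prim d0)) zz_prim.
Qed.

Lemma FF_dvd N : exists q : {poly int}, 'X^(N`!) - 1 = FF N * q.
Proof.
rewrite -prod_Cyclotomic ?fact_gt0 // (bigID (fun d => (d <= N)%N)) /=.
eexists; congr (_ * _); rewrite -big_filter /FF; congr bigop.bigop.
apply: (irr_sorted_eq ltn_trans ltnn).
- by apply: sorted_filter; [exact: ltn_trans | exact: sorted_divisors_ltn].
- exact: iota_ltn_sorted.
move=> d; rewrite mem_filter mem_iota -dvdn_divisors ?fact_gt0 //.
case: d => [|d]; first by rewrite dvd0n /= gtn_eqF ?fact_gt0 ?andbF.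
case: (leqP d.+1 N) => h /=; last by lia.
rewrite dvdn_fact; lia.
Qed.
Lemma map_ff (R : comNzRingType) N :
  map_poly (intr : int -> R) (ff N) = map_poly intr (FF N) \Po (2 *: 'X).
Proof. by rewrite /ff map_comp_poly map_polyZ /= map_polyX. Qed.

Lemma ff_binom N : is_binomial_multiple (ff N) (N`!) ((2^-1)^+(N`!)).
Proof.
split; first exact: fact_gt0.
have [q hq] := FF_dvd N.
set L := N`! in hq *.
have := congr1 (fun p => map_poly (intr : int -> rat) p \Po (2 *: 'X)) hq => /=.
rewrite rmorphM /= comp_polyM -map_ff rmorphB /= map_polyXn rmorph1.
rewrite comp_polyB comp_Xn_poly comp_polyC exprZn => e.
have -> : 'X^L - ((2^-1)^+L)%:P = (2^-1)^+L *: ((2 ^+ L) *: 'X^L - 1) :> {poly rat}.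
  rewrite scalerBr scalerA -exprMn mulVf ?expr1n ?scale1r //.
  by rewrite alg_polyC.
rewrite dvdpZr ?expf_neq0 ?invr_eq0 // -polyC1 e; exact: dvdp_mulr.
Qed.

Lemma ff_binom_inv N m a : (0 < N)%N -> is_binomial_multiple (ff N) m a ->
  (forall d, (0 < d <= N)%N -> (d %| m)%N) /\ a = (2^-1)^+m.
Proof.
move=> N0 [m0 hdiv].
have hC : map_poly (intr : int -> algC) (ff N) %| 'X^m - (ratr a)%:P.
  rewrite -(dvdp_map (@ratr algC)) rmorphB /= map_polyXn map_polyC /= in hdiv.
  rewrite -map_poly_comp in hdiv.
  by rewrite (eq_map_poly (fun x => ratr_int _ x)) in hdiv.
have hw : forall d, (0 < d <= N)%N -> (zz d * 2^-1)^+m = ratr a.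
  move=> d hd.
  have hr : root (map_poly (intr : int -> algC) (ff N)) (zz d * 2^-1).
    rewrite map_ff root_comp hornerZ hornerX mulrCA divff ?mulr1 ?pnatr_eq0 //.
    exact: FC_root.
  by move: (root_dvdp hC hr) => /rootP; rewrite !hornerE => /eqP; rewrite subr_eq0 => /eqP.
have z1 : zz 1 = 1 by rewrite -[zz 1]expr1 prim_expr_order // zz_prim.
have ha : ratr a = (2^-1)^+m :> algC by rewrite -(hw 1%N) ?z1 ?mul1r //; lia.
split.
  move=> d hd; have := hw d hd; rewrite ha exprMn => h.
  have : zz d ^+ m = 1.
    apply: (mulIf (x := (2^-1)^+m)); first by rewrite expf_neq0 // invr_eq0 pnatr_eq0.
    by rewrite h mul1r.
  by move/eqP; rewrite -(prim_order_dvd (zz_prim (_ : (0 < d)%N))) //; lia.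
have e2 : ratr ((2^-1)^+m : rat) = (2^-1)^+m :> algC.
  by rewrite rmorphXn fmorphV rmorph_nat.
apply: (fmorph_inj (@ratr algC)); exact: (etrans ha (esym e2)).
Qed.

Lemma ratHeight_pow m : (2 ^ m <= ratHeight ((2^-1)^+m))%N.
Proof.
have -> : (2^-1)^+m = (((2 ^ m)%N : int)%:~R)^-1 :> rat.
  by rewrite exprVn -natrX.
rewrite /ratHeight denqVz; last by rewrite eqz_nat expn_eq0.
by apply: leq_trans (leq_maxr _ _).
Qed.

Lemma ff_height N : exists n, (n <= N * N)%N /\ ((size (ff N)).-1 <= n)%N /\
  (polyHeight (ff N) <= 4 ^ n)%N.
Proof.
have [n [hn [hs hc]]] := FF_bound N.
exists n; split => //; rewrite size_ff; split; first by lia.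
apply/bigmax_leqP => i _.
have hi : (i <= n)%N by have := ltn_ord i; have := size_ff N; lia.
have hc0 : zcontents (ff N) != 0 by rewrite zcontents_eq0 ff_neq0.
have e := congr1 (fun p : {poly int} => absz p`_i) (zpolyEprim (ff N)).
rewrite /= coefZ abszM in e.
apply: (@leq_trans (absz (ff N)`_i)).
  rewrite e -{1}[absz _]mul1n leq_mul2r absz_gt0 hc0 orbT //.
rewrite /ff coef_compZ abszM.
have -> : absz ((2%:Z) ^+ i) = (2 ^ i)%N by rewrite abszX.
rewrite (_ : 4 = 2 * 2)%N // expnMn leq_mul //.
by rewrite leq_exp2l.
Qed.

Local Close Scope ring_scope.
Local Open Scope R_scope.
Lemma expn_pow a b : expn a b = Nat.pow a b.
Proof. elim: b => [|b IH] //=; by rewrite expnS IH. Qed.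

Lemma INR_expn a b : INR (expn a b) = INR a ^ b.
Proof. by rewrite expn_pow pow_INR. Qed.

Lemma INR_muln a b : INR (muln a b) = INR a * INR b.
Proof. by rewrite -multE mult_INR. Qed.

Lemma INR_leq a b : (a <= b)%N -> INR a <= INR b.
Proof. by move=> h; apply: le_INR; apply/ssrnat.leP. Qed.

Lemma INR_ltn a b : (a < b)%N -> INR a < INR b.
Proof. by move=> h; apply: lt_INR; apply/ssrnat.ltP. Qed.

Lemma exp_INR_mul c n : exp (INR n * c) = exp c ^ n.
Proof.
elim: n => [|n IH]; first by rewrite /= Rmult_0_l exp_0.
by rewrite S_INR Rmult_plus_distr_r Rmult_1_l exp_plus IH /= Rmult_comm.
Qed.

Lemma exp_INR_le3 n : exp (INR n) <= 3 ^ n.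
Proof.
rewrite -(Rmult_1_r (INR n)) exp_INR_mul; apply: pow_incr; split.
  by left; apply: exp_pos.
exact: exp_le_3.
Qed.

Lemma exp2_ge4 : 4 <= exp 2.
Proof.
have h : 1 + 1 < exp 1 by apply: exp_ineq1; lra.
have -> : 2 = INR 2 * 1 by simpl; lra.
rewrite exp_INR_mul /=; nra.
Qed.

Lemma ln_ge5 x : 243 <= x -> 5 <= ln x.
Proof.
move=> hx; apply: Rnot_lt_le => hl.
have h1 : exp (ln x) < exp 5 by apply: exp_increasing.
rewrite exp_ln in h1; last by lra.
have h2 : exp (INR 5) <= 3 ^ 5 := exp_INR_le3 5.
have e5 : INR 5 = 5 by simpl; lra.
rewrite e5 in h2; simpl in h2; lra.
Qed.

Lemma exp_mono x y : x <= y -> exp x <= exp y.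
Proof.
move=> h; case: (Rle_lt_or_eq_dec _ _ h) => [lt|->]; [left; exact: exp_increasing | right; done].
Qed.

Lemma ex_min (P : nat -> Prop) n : P n -> exists m, P m /\ forall m', P m' -> (m <= m')%N.
Proof.
elim/ltn_ind: n => n IH Pn.
case: (Classical_Prop.classic (exists m', P m' /\ (m' < n)%N)) => [[m' [Pm' lt]]|H].
  exact: IH m' lt Pm'.
exists n; split => // m' Pm'; rewrite leqNgt; apply/negP => lt; apply: H; by exists m'.
Qed.

Theorem theorem3p7 :
  forall d : nat, (841 <= d)%N ->
  exists f : {poly int},
    f != 0%R /\
    Rle (INR (size f).-1) (dlogd d) /\
    Rle (INR (polyHeight f)) (exp (Rmult 2 (dlogd d))) /\
    exists (m : nat) (a : rat),
      is_min_binomial_multiple f m a /\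
      Rlt (expsqrt d) (INR m) /\
      Rlt (Rpower 2 (expsqrt d)) (INR (ratHeight a)).
Proof.
move=> d hd.
set s := Nat.sqrt d.
have [hs1 hs2] := Nat.sqrt_spec d (Nat.le_0_l d).
rewrite -/s in hs1 hs2.
have s29 : (29 <= s)%N by nia.
set k := s.+1.
set N := k.*2.+1.
have hNN : (N * N <= 5 * d)%N by rewrite /N /k -addnn; nia.
have hdR : 841 <= INR d by have := INR_leq hd; simpl; lra.
have hlog : 5 <= ln (INR d) by apply: ln_ge5; lra.
have hNNR : INR (N * N) <= dlogd d.
  rewrite /dlogd; apply: Rle_trans (INR_leq hNN) _.
  rewrite INR_muln /=; nra.
exists (ff N); split; first exact: ff_neq0.
have [n [hn [hsz hh]]] := ff_height N.
have hnR : INR n <= dlogd d by apply: Rle_trans (INR_leq hn) hNNR.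
split; first by apply: Rle_trans (INR_leq hsz) hnR.
split.
  apply: Rle_trans (INR_leq hh) _.
  rewrite INR_expn.
  apply: Rle_trans (_ : INR 4 ^ n <= exp 2 ^ n) _.
    apply: pow_incr; split; [simpl; lra | have := exp2_ge4; simpl; lra].
  rewrite -exp_INR_mul; apply: exp_mono; lra.
have N0 : (0 < N)%N by [].
have [m0 [[a0 hb] hmin]] : exists m, (exists a, is_binomial_multiple (ff N) m a) /\
   forall m', (exists a, is_binomial_multiple (ff N) m' a) -> (m <= m')%N.
  by apply: ex_min; exists ((2^-1)^+(N`!))%R; exact: ff_binom.
exists m0, a0.
have [hdv ha] := ff_binom_inv N0 hb.
have h4 : (4 ^ k <= m0)%N.
  apply: lcm_bound; first by case: hb.
  by move=> j j0 jN; apply: hdv; rewrite j0 jN.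
split.
  split => // m' a' hb'; apply: hmin; by exists a'.
have hm0R : expsqrt d < INR m0.
  rewrite /expsqrt.
  have h1 : sqrt (INR d) < INR k.
    rewrite -(sqrt_square (INR k)); last exact: pos_INR.
    apply: sqrt_lt_1_alt; split; first exact: pos_INR.
    rewrite -INR_muln; apply: INR_ltn; rewrite /k; lia.
  apply: Rlt_le_trans (exp_increasing _ _ h1) _.
  apply: Rle_trans (exp_INR_le3 k) _.
  have e3 : INR 3 = 3 by simpl; lra.
  rewrite -e3 -INR_expn; apply: INR_leq; apply: leq_trans _ h4.
  by rewrite leq_exp2r.
split => //.
rewrite ha; apply: Rlt_le_trans (Rpower_lt 2 _ _ _ hm0R) _; first lra.
rewrite Rpower_pow; last lra.
apply: Rle_trans _ (INR_leq (ratHeight_pow m0)).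
have e2 : INR 2 = 2 by simpl; lra.
rewrite INR_expn e2; right; done.
Qed.
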